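(* Let $n\ge 2$, $d\ge 3$ be integers and suppose there is a proper real algebraic subvariety $\Psi\subset\mathrm{Sym}(n,d)$ such that every $\mathcal{T}\in\mathrm{Sym}(n,d)\setminus\Psi$ has a unique best rank one approximation, and this approximation is symmetric. Then every $\mathcal{T}\in\mathrm{Sym}(n,d)$ has a symmetric best rank one approximation.
   Context: $\mathrm{Sym}(n,d)$ is the space of real tensors $[t_{i_1,\ldots,i_d}]_{i_1,\ldots,i_d=1}^n$ invariant under all permutations of indices. Norm $\|\mathcal{T}\|=\sqrt{\sum t_{i_1,\ldots,i_d}^2}$; $\mathrm{S}^{n-1}$ is the Euclidean unit sphere in $\mathbb{R}^n$. A best rank one approximation of $\mathcal{T}$ is a tensor $a\,\mathbf{u}_1\otimes\cdots\otimes\mathbf{u}_d$ ($a\in\mathbb{R}$, $\mathbf{u}_j\in\mathrm{S}^{n-1}$) minimizing $\|\mathcal{T}-s\,\mathbf{x}_1\otimes\cdots\otimes\mathbf{x}_d\|$ over $s\in\mathbb{R}$, $\mathbf{x}_j\in\mathrm{S}^{n-1}$; it is symmetric if it is a symmetric tensor, i.e. of the form $b\,\mathbf{u}\otimes\cdots\otimes\mathbf{u}$. *)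

(* Defs.v *)
From HB Require Import structures.
From mathcomp Require Import all_boot all_order all_algebra all_fingroup.
From mathcomp Require Import reals.
From mathcomp Require Import mpoly.
Set Implicit Arguments. Unset Strict Implicit. Unset Printing Implicit Defensive.
Import Order.TTheory GRing.Theory Num.Theory.
Local Open Scope ring_scope.

Definition tensor (R : realType) (n d : nat) := {ffun d.-tuple 'I_n -> R}.

Definition is_symtensor (R : realType) (n d : nat) (T : tensor R n d) : Prop :=
  forall (s : 'S_d) (idx : d.-tuple 'I_n),
    T [tuple tnth idx (s i) | i < d] = T idx.

Definition tnorm (R : realType) (n d : nat) (T : tensor R n d) : R :=
  Num.sqrt (\sum_(idx : d.-tuple 'I_n) T idx ^+ 2).

Definition on_sphere (R : realType) (n : nat) (u : 'rV[R]_n) : Prop :=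
  \sum_(i < n) u 0 i ^+ 2 = 1.

Definition rank1 (R : realType) (n d : nat) (s : R) (xs : d.-tuple 'rV[R]_n)
  : tensor R n d :=
  [ffun idx : d.-tuple 'I_n => s * \prod_(j < d) (tnth xs j) 0 (tnth idx j)].

Definition best_rank1_approx (R : realType) (n d : nat) (T A : tensor R n d)
  : Prop :=
  (exists (a : R) (us : d.-tuple 'rV[R]_n),
      (forall j, on_sphere (tnth us j)) /\ A = rank1 a us) /\
  (forall (s : R) (xs : d.-tuple 'rV[R]_n),
      (forall j, on_sphere (tnth xs j)) ->
      tnorm (T - A) <= tnorm (T - rank1 s xs)).

Definition tcoords (R : realType) (n d : nat) (T : tensor R n d)
  : 'I_#|{: d.-tuple 'I_n}| -> R :=
  fun i => T (enum_val i).

(* The real algebraic subvariety of Sym(n,d) cut out by a family P of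
   polynomials in the entries of the tensor. *)
Definition zero_locus_sym (R : realType) (n d : nat)
  (P : {mpoly R[#|{: d.-tuple 'I_n}|]} -> Prop) (T : tensor R n d) : Prop :=
  is_symtensor T /\ forall p, P p -> p.@[tcoords T] = 0.

(* Main.v *)
Require Import Defs.
From HB Require Import structures.
From mathcomp Require Import all_boot all_order all_algebra all_fingroup.
From mathcomp Require Import reals.
From mathcomp Require Import mpoly.
From mathcomp Require Import all_classical all_reals all_analysis.
From mathcomp Require Import ring lra.
From Stdlib Require Import Classical_Prop.
Import Order.TTheory GRing.Theory Num.Theory.
Import numFieldNormedType.Exports.
Local Open Scope ring_scope.


Lemma cs_ineq (R : realType) (I : finType) (x y : I -> R) :
  (\sum_i x i * y i) ^+ 2 <= (\sum_i x i ^+ 2) * (\sum_i y i ^+ 2).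
Proof.
have H : 0 <= \sum_i \sum_j (x i * y j - x j * y i) ^+ 2.
  by apply: sumr_ge0 => i _; apply: sumr_ge0 => j _; exact: sqr_ge0.
have E1 : (\sum_i x i ^+ 2) * (\sum_i y i ^+ 2) = \sum_i \sum_j x i ^+ 2 * y j ^+ 2.
  by rewrite big_distrl /=; apply: eq_bigr => i _; rewrite big_distrr.
have E2 : (\sum_i x i * y i) ^+ 2 = \sum_i \sum_j (x i * y i) * (x j * y j).
  by rewrite expr2 big_distrl /=; apply: eq_bigr => i _; rewrite big_distrr.
have E3 : \sum_i \sum_j (x i * y j - x j * y i) ^+ 2 =
   \sum_i \sum_j x i ^+ 2 * y j ^+ 2 + \sum_i \sum_j x j ^+ 2 * y i ^+ 2
   - 2 * \sum_i \sum_j (x i * y i) * (x j * y j).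
  rewrite mulr_sumr -big_split -sumrB /=; apply: eq_bigr => i _.
  rewrite mulr_sumr -big_split -sumrB /=; apply: eq_bigr => j _.
  ring.
have E4 : \sum_i \sum_j x j ^+ 2 * y i ^+ 2 = \sum_i \sum_j x i ^+ 2 * y j ^+ 2 :> R.
  by rewrite exchange_big.
rewrite E4 -E1 -E2 in E3.
rewrite E3 in H. lra.
Qed.
Lemma mink (R : realType) (I : finType) (x y : I -> R) :
  Num.sqrt (\sum_i (x i + y i) ^+ 2) <=
  Num.sqrt (\sum_i x i ^+ 2) + Num.sqrt (\sum_i y i ^+ 2).
Proof.
set A := \sum_i x i ^+ 2; set B := \sum_i y i ^+ 2.
have A0 : 0 <= A by apply: sumr_ge0 => i _; exact: sqr_ge0.
have B0 : 0 <= B by apply: sumr_ge0 => i _; exact: sqr_ge0.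
have sA := sqrtr_ge0 A; have sB := sqrtr_ge0 B.
rewrite -[X in _ <= X]ger0_norm ?addr_ge0 // -sqrtr_sqr ler_sqrt ?sqr_ge0 //.
have -> : \sum_i (x i + y i) ^+ 2 = A + 2 * \sum_i x i * y i + B.
  rewrite /A /B mulr_sumr -!big_split /=; apply: eq_bigr => i _; ring.
have C : \sum_i x i * y i <= Num.sqrt A * Num.sqrt B.
  rewrite -sqrtrM // (le_trans (ler_norm _)) // -sqrtr_sqr ler_sqrt ?mulr_ge0 //.
  exact: cs_ineq.
have -> : (Num.sqrt A + Num.sqrt B) ^+ 2 = A + 2 * (Num.sqrt A * Num.sqrt B) + B.
  by rewrite sqrrD sqr_sqrtr // sqr_sqrtr // -mulr_natl; ring.
lra.
Qed.

Lemma tnorm_tri {R : realType} {n d} (X Y Z : tensor R n d) :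
  tnorm (X - Z) <= tnorm (X - Y) + tnorm (Y - Z).
Proof.
rewrite /tnorm; have := @mink R _ (fun i => (X - Y) i) (fun i => (Y - Z) i).
congr (Num.sqrt _ <= _); apply: eq_bigr => i _; rewrite !ffunE; congr (_ ^+ 2); ring.
Qed.

Lemma tnormC {R : realType} {n d} (X Y : tensor R n d) :
  tnorm (X - Y) = tnorm (Y - X).
Proof. rewrite /tnorm; congr Num.sqrt; apply: eq_bigr => i _; rewrite !ffunE; ring. Qed.

Lemma tnorm_ge0 {R : realType} {n d} (X : tensor R n d) : 0 <= tnorm X.
Proof. exact: sqrtr_ge0. Qed.

Definition diag1 (R : realType) n d (b : R) (u : 'rV[R]_n) : tensor R n d :=
  rank1 b [tuple of nseq d u].
Arguments diag1 {R n} d b u.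

Lemma sym_diag1 {R : realType} {n} d (b : R) (u : 'rV[R]_n) :
  is_symtensor (diag1 d b u).
Proof.
move=> s idx; rewrite /diag1 /rank1 !ffunE; congr (_ * _).
under eq_bigr do rewrite tnth_nseq tnth_mktuple.
under [RHS]eq_bigr do rewrite tnth_nseq.
by rewrite [RHS](reindex_inj (@perm_inj _ s)).
Qed.

Lemma sum_tuple_prod (R : realType) n d (f : 'I_n -> R) :
  \sum_(idx : d.-tuple 'I_n) \prod_(j < d) f (tnth idx j) = (\sum_i f i) ^+ d.
Proof.
rewrite -[in RHS](card_ord d) -prodr_const bigA_distr_bigA /=.
rewrite (reindex (fun t : d.-tuple 'I_n => [ffun j => tnth t j])) /=.
  by apply: eq_bigr => t _; apply: eq_bigr => j _; rewrite ffunE.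
exists (fun g : {ffun 'I_d -> 'I_n} => [tuple g j | j < d]) => [t _|g _].
  by apply: eq_from_tnth => j; rewrite tnth_mktuple ffunE.
by apply/ffunP => j; rewrite ffunE tnth_mktuple.
Qed.

Lemma sqnorm_diag1 {R : realType} {n} d (b : R) (u : 'rV[R]_n) :
  on_sphere u -> \sum_idx (diag1 d b u idx) ^+ 2 = b ^+ 2.
Proof.
move=> hu; under eq_bigr do rewrite /diag1 /rank1 ffunE exprMn -prodrXl.
rewrite -mulr_sumr.
under eq_bigr do under eq_bigr do rewrite tnth_nseq.
by rewrite (@sum_tuple_prod R n d (fun i => u 0 i ^+ 2)) hu expr1n mulr1.
Qed.

Lemma sphere_nz {R : realType} {n} {u : 'rV[R]_n} : on_sphere u -> exists i, u 0 i != 0.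
Proof.
move=> hu; case: (pickP (fun i => u 0 i != 0)) => [i hi|H]; first by exists i.
move: hu; rewrite /on_sphere big1 => [|i _]; last by move/negbFE/eqP: (H i) => ->; rewrite expr0n.
by move/eqP; rewrite eq_sym oner_eq0.
Qed.

Lemma sym_rank1_diag {R : realType} {n d} (a : R) (us : d.-tuple 'rV[R]_n) (hd : (0 < d)%N) :
  (forall j, on_sphere (tnth us j)) -> is_symtensor (rank1 a us) ->
  exists b, rank1 a us = diag1 d b (tnth us (Ordinal hd)).
Proof.
move=> hus hs; set j0 := Ordinal hd; set x := tnth us j0.
have [i0 _] := sphere_nz (hus j0).
pose k j := odflt i0 [pick i | tnth us j 0 i != 0].
have hk j : tnth us j 0 (k j) != 0.
  rewrite /k; case: pickP => [i Hi //|Hn].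
  by have [i Hi] := sphere_nz (hus j); move: (Hn i); rewrite Hi.
have [->|a0] := eqVneq a 0.
  by exists 0; apply/ffunP => idx; rewrite !ffunE !mul0r.
pose p := k j0.
pose c j := tnth us j 0 p / x 0 p.
have hc j q : tnth us j 0 q = c j * x 0 q.
  have [->|hj] := eqVneq j j0.
    by rewrite /c -/x mulfV ?mul1r //; exact: hk.
  pose idx := [tuple (if m == j0 then p else if m == j then q else k m) | m < d].
  have := hs (tperm j0 j) idx; rewrite !ffunE.
  rewrite [in LHS](bigD1 j0) //= [in RHS](bigD1 j0) //=.
  rewrite [in LHS](bigD1 j) //= 1?eq_sym // [in RHS](bigD1 j) //= 1?eq_sym //.
  rewrite !tnth_mktuple tpermL tpermR eqxx (negbTE hj) eqxx.
  set C := \prod_(m < d | (m != j0) && (m != j)) tnth us m 0 (k m).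
  have e1 : \prod_(i < d | (i != j0) && (i != j))
       tnth us i 0 (tnth [tuple tnth idx (tperm j0 j i1) | i1 < d] i) = C.
    apply: eq_bigr => m /andP[hm0 hmj].
    rewrite !tnth_mktuple tpermD; try by rewrite eq_sym.
    by rewrite ?tnth_mktuple (negbTE hm0) (negbTE hmj).
  have e2 : \prod_(i < d | (i != j0) && (i != j)) tnth us i 0 (tnth idx i) = C.
    apply: eq_bigr => m /andP[hm0 hmj].
    by rewrite !tnth_mktuple (negbTE hm0) (negbTE hmj).
  rewrite e1 e2 => E.
  have C0 : C != 0 by apply/prodf_neq0 => m _; exact: hk.
  have p0 : x 0 p != 0 by exact: hk.
  have E' : x 0 q * tnth us j 0 p = x 0 p * tnth us j 0 q.
    apply: (mulIf C0); apply: (mulfI a0); rewrite -!mulrA; exact: E.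
  rewrite /c mulrAC -/x [_ * x 0 q]mulrC E' mulrAC mulfV // mul1r //.
have -> : rank1 a us = diag1 d (a * \prod_j c j) x.
  apply/ffunP => idx; rewrite /diag1 /rank1 !ffunE -mulrA; congr (_ * _).
  rewrite -big_split /=; apply: eq_bigr => j _; by rewrite hc tnth_nseq.
by exists (a * \prod_j c j).
Qed.


Lemma density {R : realType} {n d : nat}
  (P : {mpoly R[#|{: d.-tuple 'I_n}|]} -> Prop) (T0 T : tensor R n d) :
  is_symtensor T0 -> ~ zero_locus_sym P T0 -> is_symtensor T ->
  forall e : R, 0 < e -> exists T' : tensor R n d,
    is_symtensor T' /\ ~ zero_locus_sym P T' /\ tnorm (T - T') < e.
Proof.
move=> sT0 zT0 sT e e0.
have [p [Pp hp]] : exists p, P p /\ p.@[tcoords T0] != 0.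
  apply: Classical_Prop.NNPP => H; apply: zT0; split => // p Pp.
  by case: (eqVneq p.@[tcoords T0] 0) => // hne; exfalso; apply: H; exists p.
pose Tt (t : R) : tensor R n d := [ffun i => T i + t * (T0 i - T i)].
have sTt t : is_symtensor (Tt t).
  by move=> s idx; rewrite !ffunE sT sT0.
pose N := tnorm (T0 - T).
have N0 : 0 <= N by exact: sqrtr_ge0.
have nTt t : tnorm (T - Tt t) = `|t| * N.
  rewrite /tnorm -sqrtr_sqr -sqrtrM ?sqr_ge0 // mulr_sumr; congr Num.sqrt.
  by apply: eq_bigr => i _; rewrite !ffunE; ring.
pose a (i : 'I_#|{: d.-tuple 'I_n}|) := tcoords T i.
pose b (i : 'I_#|{: d.-tuple 'I_n}|) := tcoords T0 i - tcoords T i.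
pose Q : {poly R} := \sum_(m <- msupp p) p@_m *: \prod_i ((a i)%:P + b i *: 'X) ^+ m i.
have hQ t : Q.[t] = p.@[tcoords (Tt t)].
  rewrite mevalE horner_sum; apply: eq_bigr => m _.
  rewrite hornerZ horner_prod; congr (_ * _); apply: eq_bigr => i _.
  by rewrite horner_exp hornerD hornerC hornerZ hornerX /tcoords ffunE /a /b /tcoords mulrC.
have Q0 : Q != 0.
  apply: contraNneq hp => HQ; rewrite -(_ : Tt 1 = T0) -?hQ ?HQ ?horner0 //.
  by apply/ffunP => i; rewrite ffunE mul1r addrC subrK.
pose e' := e / (N + 1).
have e'0 : 0 < e' by rewrite divr_gt0 // ltr_wpDl.
pose rs := [seq e' / (k.+1)%:R | k <- iota 0 (size Q)].
have urs : uniq rs.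
  rewrite map_inj_uniq ?iota_uniq // => k1 k2 /(mulfI (lt0r_neq0 e'0)) /invr_inj.
  by move/eqP; rewrite eqr_nat => /eqP [].
have : ~~ all (root Q) rs.
  by apply/negP => /(max_poly_roots Q0) /(_ urs); rewrite size_map size_iota ltnn.
case/allPn => t /mapP [k _ ->] nr.
exists (Tt (e' / k.+1%:R)); split; first exact: sTt.
split.
  by case=> _ /(_ p Pp) H; move: nr; rewrite /root hQ H eqxx.
rewrite nTt ger0_norm ?divr_ge0 ?ltW //.
have h1 : e' / k.+1%:R <= e'.
  by rewrite ler_pdivrMr ?ltr0Sn // ler_peMr ?(ltW e'0) // ler1n.
apply: (@le_lt_trans _ _ (e' * N)); first by rewrite ler_wpM2r.
rewrite /e' mulrAC ltr_pdivrMr ?ltr_wpDl // ltr_pM2l // ltrDl //.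
by rewrite ltr_wpDl.
Qed.

Lemma cont_sum {T : topologicalType} {R : realType} {I : Type} (r : seq I) (P : pred I)
  (F : I -> T -> R) : (forall i, continuous (F i)) ->
  continuous (fun x => \sum_(i <- r | P i) F i x).
Proof.
move=> hF; elim: r => [|i r IH].
  by under eq_fun do rewrite big_nil; exact: cst_continuous.
under eq_fun do rewrite big_cons; case: (P i) => //.
by move=> x; apply: continuousD; [exact: hF|exact: IH].
Qed.

Lemma cont_prod {T : topologicalType} {R : realType} {I : Type} (r : seq I) (P : pred I)
  (F : I -> T -> R) : (forall i, continuous (F i)) ->
  continuous (fun x => \prod_(i <- r | P i) F i x).
Proof.
move=> hF; elim: r => [|i r IH].
  by under eq_fun do rewrite big_nil; exact: cst_continuous.
under eq_fun do rewrite big_cons; case: (P i) => //.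
by move=> x; apply: continuousM; [exact: hF|exact: IH].
Qed.

Local Open Scope classical_set_scope.
Definition mkv {R : realType} {n : nat} (b : R) (u : 'rV[R]_n) : 'rV[R]_n.+1 :=
  \row_j (if unlift ord0 j is Some i then u 0 i else b).
Definition uvec {R : realType} {n : nat} (v : 'rV[R]_n.+1) : 'rV[R]_n :=
  \row_i v 0 (lift ord0 i).

Lemma mkv0 {R : realType} {n : nat} (b : R) (u : 'rV[R]_n) : mkv b u 0 ord0 = b.
Proof. by rewrite mxE unlift_none. Qed.

Lemma uvec_mkv {R : realType} {n : nat} (b : R) (u : 'rV[R]_n) : uvec (mkv b u) = u.
Proof. by apply/rowP => i; rewrite !mxE liftK. Qed.

Lemma tnorm_diag0 {R : realType} {n d : nat} (T : tensor R n d) u :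
  tnorm (T - diag1 d 0 u) = tnorm T.
Proof.
rewrite /tnorm; congr Num.sqrt; apply: eq_bigr => i _.
by rewrite /diag1 /rank1 !ffunE mul0r subr0.
Qed.

Lemma tnorm_0sub {R : realType} {n d : nat} (X : tensor R n d) :
  tnorm (0 - X) = Num.sqrt (\sum_i (X i) ^+ 2).
Proof.
rewrite /tnorm; congr Num.sqrt; apply: eq_bigr => i _.
by rewrite !ffunE sub0r sqrrN.
Qed.

Lemma evt {R : realType} {n d : nat} (T : tensor R n d) (hn : (0 < n)%N) :
  exists b (u : 'rV[R]_n), on_sphere u /\ forall b' u', on_sphere u' ->
    tnorm (T - diag1 d b u) <= tnorm (T - diag1 d b' u').
Proof.
pose M := 2 * tnorm T + 1.
have M1 : 1 <= M by have := tnorm_ge0 T; rewrite /M; lra.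
pose F (v : 'rV[R]_n.+1) := tnorm (T - diag1 d (v 0 ord0) (uvec v)).
pose K := [set v : 'rV[R]_n.+1 | (-M <= v 0 ord0) /\ (v 0 ord0 <= M) /\
   \sum_i v 0 (lift ord0 i) ^+ 2 = 1].
have sum_cont : continuous (fun v : 'rV[R]_n.+1 => \sum_i v 0 (lift ord0 i) ^+ 2).
  apply: cont_sum => i; under eq_fun do rewrite expr2.
  by move=> v; apply: continuousM; exact: coord_continuous.
have closedK : closed K.
  have -> : K = (fun v : 'rV[R]_n.+1 => v 0 ord0) @^-1` [set x | -M <= x] `&`
     ((fun v : 'rV[R]_n.+1 => v 0 ord0) @^-1` [set x | x <= M] `&`
      (fun v : 'rV[R]_n.+1 => \sum_i v 0 (lift ord0 i) ^+ 2) @^-1` [set x | x = 1]).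
    by apply/seteqP; split => v.
  apply: closedI; [|apply: closedI].
  - by apply: (proj1 (continuous_closedP _) (@coord_continuous R _ _ 0 ord0)); exact: closed_ge.
  - by apply: (proj1 (continuous_closedP _) (@coord_continuous R _ _ 0 ord0)); exact: closed_le.
  - by apply: (proj1 (continuous_closedP _) sum_cont); exact: closed_eq.
have cptK : compact K.
  have cB := @rV_compact R n.+1 (fun _ => `[-M, M]%classic) (fun _ => @segment_compact R (-M) M).
  apply: (subclosed_compact closedK cB).
  move=> v [h1 [h2 h3]] i /=; rewrite in_itv /=.
  case: (unliftP ord0 i) => [j ->|->]; last by rewrite h1 h2.
  have : v 0 (lift ord0 j) ^+ 2 <= 1.
    rewrite -h3 (bigD1 j) //= lerDl; apply: sumr_ge0 => *; exact: sqr_ge0.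
  move=> H; apply/andP; split; nra.
pose i0 : 'I_n := Ordinal hn.
pose e0 : 'rV[R]_n := \row_i (i == i0)%:R.
have he0 : on_sphere e0.
  rewrite /on_sphere (bigD1 i0) //= big1 => [|i hi]; first by rewrite mxE eqxx expr1n addr0.
  by rewrite mxE (negbTE hi) expr0n.
have inK b u : -M <= b -> b <= M -> on_sphere u -> K (mkv b u).
  move=> h1 h2 hu; rewrite /K /= mkv0; split => //; split => //.
  by rewrite -hu /on_sphere; apply: eq_bigr => i _; rewrite mxE liftK.
have K0 : K !=set0 by exists (mkv 0 e0); apply: inK => //; lra.
have Fcont : continuous F.
  have -> : F = fun v => Num.sqrt (\sum_idx (T idx - v 0 ord0 *
      \prod_(j < d) v 0 (lift ord0 (tnth idx j))) ^+ 2).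
    apply/funext => v; rewrite /F /tnorm; congr Num.sqrt; apply: eq_bigr => idx _.
    rewrite /diag1 /rank1 !ffunE; congr ((_ - _ * _) ^+ 2).
    by apply: eq_bigr => j _; rewrite tnth_nseq mxE.
  have Hs : continuous (fun v : 'rV[R]_n.+1 => \sum_idx (T idx - v 0 ord0 *
      \prod_(j < d) v 0 (lift ord0 (tnth idx j))) ^+ 2).
    apply: cont_sum => idx; under eq_fun do rewrite expr2.
    have Hp : continuous (fun w : 'rV[R]_n.+1 => \prod_(j < d) w 0 (lift ord0 (tnth idx j))).
      by apply: cont_prod => j; exact: coord_continuous.
    have Hb : continuous (fun w : 'rV[R]_n.+1 => T idx - w 0 ord0 * \prod_(j < d) w 0 (lift ord0 (tnth idx j))).
      move=> w; apply: (@continuousB R R _ (fun _ => T idx) (fun w : 'rV[R]_n.+1 => w 0 ord0 * \prod_(j < d) w 0 (lift ord0 (tnth idx j)))); first exact: cst_continuous.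
      by apply: continuousM; [exact: coord_continuous|exact: Hp].
    move=> w; exact: (continuousM (Hb w) (Hb w)).
  move=> v; apply: (continuous_comp (Hs v) (@sqrt_continuous R _)).
have [c cK cmin] := EVT_min_rV K0 cptK (@continuous_subspaceT _ _ K F Fcont).
move: (cK); rewrite inE => -[c1 [c2 c3]].
exists (c 0 ord0), (uvec c); split.
  by rewrite /on_sphere -c3; apply: eq_bigr => i _; rewrite mxE.
move=> b' u' hu'.
have Fmk b : -M <= b -> b <= M -> F c <= tnorm (T - diag1 d b u').
  move=> h1 h2; have := cmin (mkv b u'); rewrite inE => /(_ (inK _ _ h1 h2 hu')).
  by rewrite /F mkv0 uvec_mkv.
have [hb|hb] := leP `|b'| M.
  by move: hb; rewrite ler_norml => /andP[h1 h2]; exact: Fmk.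
have h0 := Fmk 0; rewrite tnorm_diag0 in h0.
have h0' : F c <= tnorm T by apply: h0; lra.
have := tnorm_tri 0 T (diag1 d b' u').
rewrite tnorm_0sub sqnorm_diag1 // sqrtr_sqr tnorm_0sub.
have -> : \sum_i T i ^+ 2 = tnorm T ^+ 2 by rewrite sqr_sqrtr // sumr_ge0 // => *; exact: sqr_ge0.
rewrite sqrtr_sqr (ger0_norm (tnorm_ge0 T)) => H.
rewrite /F in h0'; rewrite /M in hb; lra.
Qed.

Theorem proposition3p5 (R : realType) (n d : nat) (hn : (2 <= n)%N) (hd : (3 <= d)%N)
  (P : {mpoly R[#|{: d.-tuple 'I_n}|]} -> Prop) :
  (* Psi := zero_locus_sym P is a proper subvariety of Sym(n,d) *)
  (exists T : tensor R n d, is_symtensor T /\ ~ zero_locus_sym P T) ->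
  (forall T : tensor R n d, is_symtensor T -> ~ zero_locus_sym P T ->
     exists A : tensor R n d,
       (best_rank1_approx T A /\ forall B, best_rank1_approx T B -> B = A) /\
       is_symtensor A) ->
  forall T : tensor R n d, is_symtensor T ->
    exists A : tensor R n d, best_rank1_approx T A /\ is_symtensor A.
Proof.
move=> [T0 [sT0 zT0]] Hu T sT.
have hn0 : (0 < n)%N by apply: leq_trans hn.
have hd0 : (0 < d)%N by apply: leq_trans hd.
have [b [u [hu hmin]]] := evt T hn0.
exists (diag1 d b u); split; last exact: sym_diag1.
split.
  exists b, [tuple of nseq d u]; split => // j; by rewrite tnth_nseq.
move=> s xs hxs; rewrite leNgt; apply/negP => hlt.
set D := tnorm (T - diag1 d b u) - tnorm (T - rank1 s xs).
have D0 : 0 < D by rewrite /D subr_gt0.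
have D2 : 0 < D / 2 by rewrite divr_gt0.
have [T' [sT' [zT' hTT']]] := density P T0 T sT0 zT0 sT (D / 2) D2.
have [A [[[[a [us [hus EA]]] hbest] _] sA]] := Hu T' sT' zT'.
have [b2 E] := sym_rank1_diag a us hd0 hus (eq_ind _ _ sA _ EA).
have h1 := hmin b2 _ (hus (Ordinal hd0)).
have h2 := tnorm_tri T T' A.
have h3 := hbest s xs hxs.
have h4 := tnorm_tri T' T (rank1 s xs).
rewrite (tnormC T' T) in h4.
rewrite -E -EA in h1.
rewrite /D in hTT'; lra.
Qed.
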